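(* For every integer $n\ge0$, $$\sum_{k=0}^n\frac{\binom{2n+1}{k}(-1)^k}{k-(2n+1)}=-\frac34\sum_{k=1}^n\frac{\binom{2k}{k}(-1)^k}{k}-\sum_{k=0}^n\frac{\binom{2k}{k}(-1)^k}{2k+1}.$$ *)

(* Defs.v *)
From mathcomp Require Import all_boot all_order all_algebra.

(* Main.v *)
Require Import Defs.
From mathcomp Require Import all_boot all_order all_algebra.
From mathcomp Require Import ring lra.
Import GRing.Theory Num.Theory.
Local Open Scope ring_scope.

Lemma altsum (q j : nat) :
  \sum_(0 <= k < j.+1) ('C(q.+1, k)%:R * (-1) ^+ k : rat) = (-1) ^+ j * 'C(q, j)%:R.
Proof.
elim: j => [|j IH]; first by rewrite big_nat1 !bin0 expr0; ring.
rewrite big_nat_recr //= IH binS natrD exprS; ring.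
Qed.

Lemma termA (M K : nat) : (K < M)%N ->
  'C(M.+1, K.+1)%:R * (-1) ^+ K.+1 / ((M.+1)%:R - (K.+1)%:R) =
  'C(M.+1, K.+1)%:R * (-1) ^+ K.+1 / (M.+1)%:R
   - 'C(M, K)%:R * (-1) ^+ K / (M%:R - K%:R) :> rat.
Proof.
move=> KM.
have hd : (M%:R - K%:R : rat) != 0.
  by rewrite subr_eq0 eqr_nat; apply/negP => /eqP E; rewrite E ltnn in KM.
have e := mul_bin_down M.+1 K.+1.
rewrite /= subSS in e.
have e' : ((M.+1)%:R * 'C(M, K.+1)%:R = (M%:R - K%:R) * 'C(M.+1, K.+1)%:R :> rat).
  by rewrite -!natrM e natrM natrB // ltnW.
have hm : ((M.+1)%:R : rat) != 0 by rewrite pnatr_eq0.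
have E2 : ((M.+1)%:R - (K.+1)%:R : rat) = M%:R - K%:R by rewrite -!natr1; ring.
rewrite E2.
have Eb : ('C(M, K)%:R : rat) = 'C(M.+1, K.+1)%:R - 'C(M, K.+1)%:R.
  by rewrite binS natrD; ring.
rewrite Eb.
have Ea : ('C(M, K.+1)%:R : rat) = (M%:R - K%:R) * 'C(M.+1, K.+1)%:R / (M.+1)%:R.
  by rewrite -e' mulrAC divff // mul1r.
rewrite Ea exprS; field; by rewrite hd addrC natr1 hm.
Qed.

From mathcomp Require Import zify.

Lemma Srec (p j : nat) :
  \sum_(0 <= k < j.+1) ('C((p + j).+1, k)%:R * (-1) ^+ k / (((p + j).+1)%:R - k%:R) : rat)
  = (-1) ^+ j * \sum_(0 <= l < j.+1) ('C(p + l, l)%:R / ((p + l).+1)%:R).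
Proof.
elim: j p => [|j IH] p.
  rewrite !big_nat1 !bin0 !addn0 expr0 subr0; ring.
rewrite addnS big_nat_recl //.
rewrite (eq_big_nat _ _ (F2 := fun k => 'C((p+j).+2,k.+1)%:R * (-1)^+k.+1 / (((p+j).+2)%:R : rat)
   - 'C((p+j).+1,k)%:R*(-1)^+k/(((p+j).+1)%:R - k%:R))); last first.
  by move=> k /andP[_ hk]; apply: termA; lia.
rewrite sumrB IH -mulr_suml.
have H := altsum (p+j).+1 j.+1.
rewrite big_nat_recl // bin0 expr0 mulr1 in H.
have Sa : \sum_(0 <= i < j.+1) ('C((p + j).+2, i.+1)%:R * (-1) ^+ i.+1 : rat)
   = (-1) ^+ j.+1 * 'C((p + j).+1, j.+1)%:R - 1.
  by rewrite -H; ring.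
rewrite Sa [X in _ = _ * X]big_nat_recr //= addnS bin0 expr0 subr0 exprS.
have hm : (((p+j).+2)%:R : rat) != 0 by rewrite pnatr_eq0.
field.
have -> : (2 + (p%:R + j%:R) : rat) = ((p+j).+2)%:R by rewrite -!natr1 natrD; ring.
exact: hm.
Qed.

Definition FF (n l : nat) : rat := 'C(n + l, l)%:R / ((n + l).+1)%:R.
Definition GG (n l : nat) : rat := FF n l * (l%:R * (l%:R + 2 * n%:R + 2)) / (n%:R + 1) ^+ 2.

Lemma wz (n l : nat) : FF n.+1 l + FF n l = GG n l.+1 - GG n l.
Proof.
rewrite /GG /FF addSn addnS.
set x := ('C(n + l, l)%:R : rat).
have e1 := mul_bin_down (n+l).+1 l.
rewrite /= subSn ?leq_addl // addnK in e1.
have e2 := mul_bin_left (n+l).+1 l.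
rewrite subSn ?leq_addl // addnK in e2.
have hn : (n%:R + 1 : rat) != 0 by rewrite natr1 pnatr_eq0.
have hl : (l%:R + 1 : rat) != 0 by rewrite natr1 pnatr_eq0.
have Ey : ('C((n+l).+1, l)%:R : rat) = ((n+l).+1)%:R * x / (n%:R + 1).
  by rewrite /x -natrM e1 natrM -natr1; field; rewrite ?hn ?hl.
have Ez : ('C((n+l).+1, l.+1)%:R : rat) = (n%:R + 1) * 'C((n+l).+1, l)%:R / (l%:R + 1).
  by rewrite (natr1 n) -natrM -e2 natrM -natr1; field; rewrite ?hn ?hl.
rewrite Ez Ey -!natr1 !natrD.
field; by rewrite hn hl -!natrD !natr1 !pnatr_eq0.
Qed.

Lemma Vstep n : \sum_(0 <= l < n.+2) FF n.+1 l + \sum_(0 <= l < n.+1) FF n l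
  = ((3%:R / 4%:R) / (n.+1)%:R + 1 / (((n.+1).*2).+1)%:R) * 'C((n.+1).*2, n.+1)%:R.
Proof.
rewrite big_nat_recr //= addrAC -big_split /=.
rewrite (eq_bigr _ (fun l _ => wz n l)) telescope_sumr //.
rewrite /GG /FF -!addnn !addSn !addnS !addn0 bin0 mul0r mulr0 mul0r subr0.
have e := mul_bin_left (n+n).+1 n.
rewrite subSn ?leq_addl // addnK in e.
have Ea : 'C((n+n).+1, n.+1) = 'C((n+n).+1, n).
  by apply/eqP; move/eqP: e; rewrite eqn_mul2l.
have Ec : 'C((n+n).+2, n.+1) = 2 * 'C((n+n).+1, n).
  by rewrite binS Ea addnn -mul2n.
rewrite Ec Ea natrM -!natr1 !natrD.
field; by rewrite -!natrD !natr1 !pnatr_eq0.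
Qed.

Lemma VR n : - (-1) ^+ n * \sum_(0 <= l < n.+1) FF n l
  = - (3%:R / 4%:R) *
      \sum_(1 <= k < n.+1) ('C(2 * k, k)%:R * (-1) ^+ k / k%:R : rat)
    - \sum_(0 <= k < n.+1) ('C(2 * k, k)%:R * (-1) ^+ k / (2 * k + 1)%:R : rat).
Proof.
elim: n => [|n IH].
  by rewrite !big_nat1 big_geq // /FF /= bin0 expr0; ring.
have V := Vstep n.
have R1 : \sum_(1 <= k < n.+2) ('C(2 * k, k)%:R * (-1) ^+ k / k%:R : rat)
  = \sum_(1 <= k < n.+1) ('C(2 * k, k)%:R * (-1) ^+ k / k%:R : rat)
    + 'C(2 * n.+1, n.+1)%:R * (-1) ^+ n.+1 / (n.+1)%:R by rewrite big_nat_recr.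
have R0 : \sum_(0 <= k < n.+2) ('C(2 * k, k)%:R * (-1) ^+ k / (2 * k + 1)%:R : rat)
  = \sum_(0 <= k < n.+1) ('C(2 * k, k)%:R * (-1) ^+ k / (2 * k + 1)%:R : rat)
    + 'C(2 * n.+1, n.+1)%:R * (-1) ^+ n.+1 / (2 * n.+1 + 1)%:R by rewrite big_nat_recr.
rewrite R1 R0.
have -> : \sum_(0 <= l < n.+2) FF n.+1 l = 
  ((3%:R / 4%:R) / (n.+1)%:R + 1 / (((n.+1).*2).+1)%:R) * 'C((n.+1).*2, n.+1)%:R
   - \sum_(0 <= l < n.+1) FF n l by rewrite -V addrK.
move: IH.
generalize (\sum_(0<=l<n.+1) FF n l) (\sum_(1 <= k < n.+1) ('C(2 * k, k)%:R * (-1) ^+ k / k%:R : rat)) (\sum_(0 <= k < n.+1) ('C(2 * k, k)%:R * (-1) ^+ k / (2 * k + 1)%:R : rat)) => W S1 S0 IH.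
have E : S0 = - (3%:R / 4%:R) * S1 - (- (-1) ^+ n * W).
  by transitivity (- (3%:R / 4%:R) * S1 - (- (3%:R / 4%:R) * S1 - S0)); [ring | rewrite IH].
rewrite E -mul2n addn1 exprS.
have h1 : ((n.+1)%:R : rat) != 0 by rewrite pnatr_eq0.
have h2 : ((2 * n.+1).+1%:R : rat) != 0 by rewrite pnatr_eq0.
field.
have -> : (1 + 2 * (1 + n%:R) : rat) = ((2*n.+1).+1)%:R by rewrite -[(2*n.+1).+1]addn1 !natrD natrM -natr1; ring.
have -> : (1 + n%:R : rat) = (n.+1)%:R by rewrite -natr1; ring.
by rewrite h1 h2.
Qed.

Theorem mainTheorem11 (n : nat) :
  \sum_(0 <= k < n.+1)
      ('C(2 * n + 1, k)%:R * (-1) ^+ k / (k%:R - (2 * n + 1)%:R) : rat)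
  = - (3%:R / 4%:R) *
      \sum_(1 <= k < n.+1) ('C(2 * k, k)%:R * (-1) ^+ k / k%:R : rat)
    - \sum_(0 <= k < n.+1) ('C(2 * k, k)%:R * (-1) ^+ k / (2 * k + 1)%:R : rat).
Proof.
rewrite -VR.
have S := Srec n n.
have -> : \sum_(0 <= k < n.+1)
      ('C(2 * n + 1, k)%:R * (-1) ^+ k / (k%:R - (2 * n + 1)%:R) : rat)
  = - \sum_(0 <= k < n.+1) ('C((n + n).+1, k)%:R * (-1) ^+ k / (((n + n).+1)%:R - k%:R) : rat).
  rewrite -sumrN; apply: eq_bigr => k _.
  by rewrite mul2n -addnn addn1 -[k%:R - _]opprB invrN mulrN.
rewrite S /FF; ring.
Qed.
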